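(* Let $q\ge2$, $n\ge1$ and $\boldsymbol{x}\neq\boldsymbol{y}\in\Sigma_q^n$. (1) $d_H(\mathcal{R}(\boldsymbol{x}),\mathcal{R}(\boldsymbol{y}))=3$ if and only if there exist $\boldsymbol{u},\boldsymbol{v}\in\Sigma_q^{\ge0}$, integers $t_1,t_2\ge1$ and symbols $a_1,b_1,a_2,b_2\in\Sigma_q$ with $a_1\ne b_1$, $a_2\ne b_2$, such that $\{\{\alpha_{t_1}(a_1b_1)[t_1],a_2\}\}\neq\{\{\alpha_{t_1}(b_1a_1)[t_1],b_2\}\}$ and $\boldsymbol{x}=(\boldsymbol{u},\boldsymbol{\alpha}_{t_1}(a_1b_1),\boldsymbol{\alpha}_{t_2}(a_2b_2),\boldsymbol{v})$, $\boldsymbol{y}=(\boldsymbol{u},\boldsymbol{\alpha}_{t_1}(b_1a_1),\boldsymbol{\alpha}_{t_2}(b_2a_2),\boldsymbol{v})$. (2) $d_H(\mathcal{R}(\boldsymbol{x}),\mathcal{R}(\boldsymbol{y}))=4$ if and only if one of the following holds: (A) there exist $\boldsymbol{u},\boldsymbol{w}\in\Sigma_q^{\ge0}$, $\boldsymbol{v}\in\Sigma_q^{\ge1}$, integers $t_1,t_2\ge1$ and symbols $a_1,b_1,a_2,b_2\in\Sigma_q$ with $a_1\ne b_1$, $a_2\ne b_2$, such that $\boldsymbol{x}=(\boldsymbol{u},\boldsymbol{\alpha}_{t_1}(a_1b_1),\boldsymbol{v},\boldsymbol{\alpha}_{t_2}(a_2b_2),\boldsymbol{w})$ and $\boldsymbol{y}=(\boldsymbol{u},\boldsymbol{\alpha}_{t_1}(b_1a_1),\boldsymbol{v},\boldsymbol{\alpha}_{t_2}(b_2a_2),\boldsymbol{w})$;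 (B) there exist $\boldsymbol{u},\boldsymbol{v}\in\Sigma_q^{\ge0}$, integers $t_1,t_2,t_3\ge1$ and symbols $a_1,b_1,a_2,b_2,a_3,b_3\in\Sigma_q$ with $a_i\ne b_i$ ($i=1,2,3$), such that $\{\{\alpha_{t_1}(a_1b_1)[t_1],a_2\}\}\neq\{\{\alpha_{t_1}(b_1a_1)[t_1],b_2\}\}$, $\{\{\alpha_{t_2}(a_2b_2)[t_2],a_3\}\}\neq\{\{\alpha_{t_2}(b_2a_2)[t_2],b_3\}\}$, and $\boldsymbol{x}=(\boldsymbol{u},\boldsymbol{\alpha}_{t_1}(a_1b_1),\boldsymbol{\alpha}_{t_2}(a_2b_2),\boldsymbol{\alpha}_{t_3}(a_3b_3),\boldsymbol{v})$, $\boldsymbol{y}=(\boldsymbol{u},\boldsymbol{\alpha}_{t_1}(b_1a_1),\boldsymbol{\alpha}_{t_2}(b_2a_2),\boldsymbol{\alpha}_{t_3}(b_3a_3),\boldsymbol{v})$.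
   Context: $\Sigma_q=\{0,\dots,q-1\}$; $\Sigma_q^{\ge0}$ (resp. $\Sigma_q^{\ge1}$) is the set of all finite (resp. nonempty finite) sequences over $\Sigma_q$; $(\cdot,\cdot)$ is concatenation. For $\boldsymbol{x}\in\Sigma_q^n$, $x[i]$ is its $i$-th entry, with $x[i]=0$ for $i\notin[1,n]$. $\mathcal{R}(\boldsymbol{x})$ is the vector of length $n+1$ whose $i$-th entry is the multiset $\{\{x[i-1],x[i]\}\}$. $d_H$ is Hamming distance. For distinct $a,b$ and $t\ge0$, $\boldsymbol{\alpha}_t(ab)$ is the alternating sequence $abab\cdots$ of length $t$ and $\alpha_t(ab)[t]$ its last entry; $\{\{\cdot\}\}$ denotes a multiset. *)

(* Defs.v *)
From mathcomp Require Import all_boot.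
Set Implicit Arguments. Unset Strict Implicit. Unset Printing Implicit Defensive.

Definition word (q : nat) (s : seq nat) : bool := all (fun a => a < q) s.

(* x[i] for 1-based index i, with x[i] = 0 outside [1, size x]. *)
Definition entry (x : seq nat) (i : nat) : nat :=
  if (1 <= i <= size x) then nth 0 x i.-1 else 0.

(* The multiset {{a, b}} of two symbols, as the sorted pair. *)
Definition mset2 (a b : nat) : nat * nat := (minn a b, maxn a b).

Definition Rvec (x : seq nat) : seq (nat * nat) :=
  [seq mset2 (entry x i.-1) (entry x i) | i <- iota 1 (size x).+1].

Definition dH {T : eqType} (s t : seq T) : nat :=
  count (fun p : T * T => p.1 != p.2) (zip s t).

Definition alpha (t a b : nat) : seq nat :=
  mkseq (fun i => if odd i then b else a) t.

Definition alpha_last (t a b : nat) : nat := entry (alpha t a b) t.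

(* Main.v *)
Require Import Defs.
From mathcomp Require Import all_boot zify.
Set Implicit Arguments. Unset Strict Implicit.

Lemma mset2P a b c d : mset2 a b = mset2 c d <-> (a = c /\ b = d) \/ (a = d /\ b = c).
Proof. rewrite /mset2; split. case=> h1 h2; lia. move=> h; congr pair; lia. Qed.

Lemma mset2_eqb a b c d :
  (mset2 a b == mset2 c d) = ((a == c) && (b == d)) || ((a == d) && (b == c)).
Proof.
apply/idP/idP => [/eqP/mset2P [[-> ->]|[-> ->]] | ]; first by rewrite !eqxx.
  by rewrite !eqxx orbT.
by case/orP => /andP [/eqP -> /eqP ->]; apply/eqP/mset2P; auto.
Qed.

Fixpoint Cf (x y : seq nat) {struct x} : nat :=
  match x, y with
  | a :: x', b :: y' => if a == b then Cf x' y' else (Df a b x' y').+1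
  | _, _ => 0
  end
with Df (pa pb : nat) (x y : seq nat) {struct x} : nat :=
  match x, y with
  | a :: x', b :: y' =>
      if a == b then (Cf x' y').+1
      else if (a == pb) && (b == pa) then Df a b x' y' else (Df a b x' y').+1
  | _, _ => 1
  end.

Definition G p x := [seq mset2 (nth 0 (p::x) i.-1) (nth 0 (p::x) i) | i <- iota 1 (size x).+1].

Lemma entryE x i : entry x i = nth 0 (0::x) i.
Proof.
rewrite /entry; case: i => [|i] //=.
case: ltnP => h //. by rewrite nth_default.
Qed.

Lemma Rvec_G x : Rvec x = G 0 x.
Proof. by rewrite /Rvec /G; apply/eq_map => i; rewrite !entryE. Qed.

Lemma G_cons p a x : G p (a :: x) = mset2 p a :: G a x.
Proof.
rewrite /G [size _]/= -[iota 1 _]/(1 :: iota (1 + 1) (size x).+1) map_cons; congr cons.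
rewrite iotaDl -map_comp; apply/eq_in_map => i; rewrite mem_iota /=.
by case: i.
Qed.

Lemma dH_cons (c d : nat * nat) s t : dH (c::s) (d::t) = (c != d) + dH s t.
Proof. by []. Qed.

Lemma dH_G p q x y : size x = size y ->
  dH (G p x) (G q y) = if p == q then Cf x y else Df p q x y.
Proof.
elim: x y p q => [|a x IH] [|b y] //= p q.
  move=> _; rewrite /G /= /dH /= mset2_eqb.
  case: (p =P q) => [->|hpq]; first by rewrite eqxx.
  by case: (p =P 0) => hp; case: (0 =P q) => hq //=; case: hpq; rewrite hp -hq.
case=> sz; rewrite !G_cons dH_cons IH // mset2_eqb.
case: (p =P q) => [->|hpq]; rewrite ?eqxx /=.
  case: (a =P b) => [->|hab]; rewrite ?eqxx //=.
  by case: (q =P b) => //= hqb; case: (a =P q) => //= haq; case: hab; rewrite haq hqb.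
case: (a =P b) => [->|hab] /=.
  case: (p =P b) => hpb; case: (b =P q) => hbq //=; case: hpq; by rewrite hpb hbq.
case: (p =P b) => [->|hpb]; case: (a =P q) => [->|haq]; rewrite ?eqxx //= ?andbF //; case: (b =P p) => //= *; by case: hpb.
Qed.

Lemma dH_Cf x y : size x = size y -> dH (Rvec x) (Rvec y) = Cf x y.
Proof. by move=> h; rewrite !Rvec_G dH_G. Qed.
Definition lastal (t a b : nat) := if odd t then b else a.

Lemma alphaS t a b : alpha t.+1 a b = a :: alpha t b a.
Proof.
rewrite /alpha /mkseq -[iota 0 _]/(0 :: iota (1 + 0) t) iotaDl map_cons -map_comp /=.
by congr cons; apply/eq_map => i /=; case: (odd i).
Qed.

Lemma alpha_lastS t a b : alpha_last t.+1 a b = lastal t a b.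
Proof.
rewrite /alpha_last /entry /alpha size_mkseq leqnn /= nth_mkseq //.
Qed.

Lemma lastal_neq t a b : a != b -> lastal t a b != lastal t b a.
Proof. by rewrite /lastal; case: (odd t) => //; rewrite eq_sym. Qed.

Lemma lastalS t a b : lastal t.+1 a b = lastal t b a.
Proof. by rewrite /lastal /=; case: (odd t). Qed.

Lemma Cf_refl x : Cf x x = 0.
Proof. by elim: x => //= a x ->; rewrite eqxx. Qed.

Lemma Df_same p q x : Df p q x x = 1.
Proof. by case: x => //= a x; rewrite eqxx Cf_refl. Qed.

Lemma Cf_cat u x y : Cf (u ++ x) (u ++ y) = Cf x y.
Proof. by elim: u => //= a u ->; rewrite eqxx. Qed.

Lemma Df_alpha t a b x y : a != b ->
  Df a b (alpha t b a ++ x) (alpha t a b ++ y) = Df (lastal t a b) (lastal t b a) x y.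
Proof.
elim: t a b => [|t IH] a b hab; first by [].
rewrite !alphaS /= eq_sym (negbTE hab) !eqxx /= IH 1?eq_sym //.
by rewrite !lastalS.
Qed.

Lemma Cf_block t a b x y : a != b ->
  Cf (alpha t.+1 a b ++ x) (alpha t.+1 b a ++ y) = (Df (lastal t a b) (lastal t b a) x y).+1.
Proof. by move=> hab; rewrite !alphaS /= (negbTE hab) Df_alpha. Qed.

Lemma Df_ge1 a b x y : 1 <= Df a b x y.
Proof.
elim: x a b y => [|c x IH] a b [|d y] //=.
by case: ifP => // _; case: ifP.
Qed.

Lemma Cf_ne1 x y : Cf x y != 1.
Proof.
elim: x y => [|c x IH] [|d y] //=.
case: ifP => // _; rewrite eqSS; have := Df_ge1 c d x y; by case: (Df c d x y).
Qed.

Lemma Cf0 x y : size x = size y -> Cf x y = 0 -> x = y.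
Proof.
elim: x y => [|c x IH] [|d y] //= [sz].
by case: (c =P d) => [->|] // h; rewrite (IH y).
Qed.

Lemma Cf_inv x y : size x = size y ->
  x = y \/ exists u a b x' y', [/\ a != b, x = u ++ a :: x', y = u ++ b :: y',
     size x' = size y' & Cf x y = (Df a b x' y').+1].
Proof.
elim: x y => [|c x IH] [|d y] //=; try by left.
case=> sz; case: (c =P d) => [<-|/eqP hcd].
  case: (IH y sz) => [->|[u [a [b [x' [y' [h1 h2 h3 h4 h5]]]]]]]; first by left.
  right; exists (c :: u), a, b, x', y'; split => //=; rewrite ?h2 ?h3 // ?eqxx.
by right; exists [::], c, d, x, y; split.
Qed.

Definition nonswap (l l' : nat) (x y : seq nat) :=
  match x, y with c :: _, d :: _ => ~~ ((c == l') && (d == l)) | _, _ => true end.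

Lemma Df_inv a b x y : a != b -> size x = size y ->
  exists t x'' y'', [/\ x = alpha t b a ++ x'', y = alpha t a b ++ y'', size x'' = size y'',
     Df a b x y = Df (lastal t a b) (lastal t b a) x'' y'' &
     nonswap (lastal t a b) (lastal t b a) x'' y''].
Proof.
elim: x a b y => [|c x IH] a b [|d y] //= hab.
- by move=> _; exists 0, [::], [::].
- case=> sz.
  case hs: ((c == b) && (d == a)).
    move/andP: hs => [/eqP ec /eqP ed]; subst c d.
    have hba : b != a by rewrite eq_sym.
    case: (IH b a y hba sz) => t [x'' [y'' [h1 h2 h3 h4 h5]]].
    exists t.+1, x'', y''; rewrite !alphaS !lastalS /= -h1 -h2; split => //.
    by rewrite (negbTE hba).
  by exists 0, (c :: x), (d :: y); split; rewrite /= /lastal /= ?sz ?hs.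
Qed.

Lemma Df_ns l l' x y : l != l' -> nonswap l l' x y -> size x = size y ->
  [\/ [/\ x = [::], y = [::] & Df l l' x y = 1],
      exists c x0 y0, [/\ x = c :: x0, y = c :: y0 & Df l l' x y = (Cf x0 y0).+1] |
      exists c d x0 y0, [/\ c != d, ~~ ((c == l') && (d == l)), x = c :: x0, y = d :: y0 &
          Df l l' x y = (Df c d x0 y0).+1 /\ size x0 = size y0]].
Proof.
case: x => [|c x0]; case: y => [|d y0] //= hl hns.
- by move=> _; constructor 1.
case=> sz; case: (c =P d) => [<-|/eqP hcd].
  by constructor 2; exists c, x0, y0.
constructor 3; exists c, d, x0, y0; split => //.
by rewrite ?(negbTE hns).
Qed.

Lemma Df1 a b x y : a != b -> size x = size y -> Df a b x y = 1 ->
  exists t v, x = alpha t b a ++ v /\ y = alpha t a b ++ v.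
Proof.
move=> hab sz; case: (Df_inv hab sz) => t [x'' [y'' [h1 h2 h3 ->  h5]]].
case: (Df_ns (lastal_neq t hab) h5 h3).
- by move=> [e1 e2 _]; exists t, [::]; rewrite h1 h2 e1 e2.
- move=> [c [x0 [y0 [e1 e2 ->]]]] /succn_inj h; subst x'' y''.
  move: h3 => /= [sz0]; have e := Cf0 sz0 h; subst y0.
  by exists t, (c :: x0).
- move=> [c [d [x0 [y0 [_ _ _ _ [-> _]]]]]] [].
  by have := Df_ge1 c d x0 y0; case: (Df c d x0 y0).
Qed.

Lemma Df2 a b x y : a != b -> size x = size y -> Df a b x y = 2 ->
  exists t t2 a2 b2 v, [/\ a2 != b2, ~~ ((a2 == lastal t b a) && (b2 == lastal t a b)),
     x = alpha t b a ++ alpha t2.+1 a2 b2 ++ v & y = alpha t a b ++ alpha t2.+1 b2 a2 ++ v].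
Proof.
move=> hab sz; case: (Df_inv hab sz) => t [x'' [y'' [h1 h2 h3 ->  h5]]].
case: (Df_ns (lastal_neq t hab) h5 h3).
- by move=> [_ _ ->].
- move=> [c [x0 [y0 [e1 e2 ->]]]] /succn_inj h.
  by have := Cf_ne1 x0 y0; rewrite h.
- move=> [c [d [x0 [y0 [hcd hns e1 e2 [-> sz0]]]]]] /succn_inj h.
  case: (Df1 hcd sz0 h) => t2 [v [e3 e4]].
  exists t, t2, c, d, v; split => //.
  + by rewrite h1 e1 e3 alphaS.
  + by rewrite h2 e2 e4 alphaS.
Qed.

Lemma Df3 a b x y : a != b -> size x = size y -> Df a b x y = 3 ->
  (exists t t2 c v0 a2 b2 w, [/\ a2 != b2,
     x = alpha t b a ++ (c :: v0) ++ alpha t2.+1 a2 b2 ++ w &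
     y = alpha t a b ++ (c :: v0) ++ alpha t2.+1 b2 a2 ++ w]) \/
  (exists t a2 b2 t2 t3 a3 b3 v, [/\ a2 != b2, a3 != b3,
     ~~ ((a2 == lastal t b a) && (b2 == lastal t a b)),
     ~~ ((a3 == lastal t2 b2 a2) && (b3 == lastal t2 a2 b2)) &
     x = alpha t b a ++ a2 :: alpha t2 b2 a2 ++ alpha t3.+1 a3 b3 ++ v /\
     y = alpha t a b ++ b2 :: alpha t2 a2 b2 ++ alpha t3.+1 b3 a3 ++ v]).
Proof.
move=> hab sz; case: (Df_inv hab sz) => t [x'' [y'' [h1 h2 h3 ->  h5]]].
case: (Df_ns (lastal_neq t hab) h5 h3).
- by move=> [_ _ ->].
- move=> [c [x0 [y0 [e1 e2 ->]]]] /succn_inj h.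
  subst x'' y''; move: h3 => /succn_inj sz0.
  case: (Cf_inv sz0) => [e|[u [a2 [b2 [x' [y' [hd f1 f2 sz' hc]]]]]]].
    by subst y0; rewrite Cf_refl in h.
  move: h; rewrite hc => /succn_inj /(Df1 hd sz') [t2 [w [g1 g2]]].
  left; exists t, t2, c, u, a2, b2, w; split.
  + done.
  + by rewrite h1 f1 g1 alphaS.
  + by rewrite h2 f2 g2 alphaS.
- move=> [c [d [x0 [y0 [hcd hns e1 e2 [-> sz0]]]]]] /succn_inj h.
  case: (Df2 hcd sz0 h) => t2 [t3 [a3 [b3 [v [hd hns2 g1 g2]]]]].
  right; exists t, c, d, t2, t3, a3, b3, v; split => //.
  by rewrite h1 h2 e1 e2 g1 g2.
Qed.

Lemma ms_ns l l' a2 b2 : l != l' ->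
  (mset2 l a2 != mset2 l' b2) = ~~ ((a2 == l') && (b2 == l)).
Proof. rewrite mset2_eqb => h; lia. Qed.

Lemma Df_eqhead p q c x y : Df p q (c :: x) (c :: y) = (Cf x y).+1.
Proof. by rewrite /= eqxx. Qed.

Lemma Df_neqhead p q a b x y : a != b -> ~~ ((a == q) && (b == p)) ->
  Df p q (a :: x) (b :: y) = (Df a b x y).+1.
Proof. by move=> h1 h2; rewrite /= (negbTE h1) (negbTE h2). Qed.

Lemma Cf_two u v t1 t2 a1 b1 a2 b2 : a1 != b1 -> a2 != b2 ->
  ~~ ((a2 == lastal t1 b1 a1) && (b2 == lastal t1 a1 b1)) ->
  Cf (u ++ alpha t1.+1 a1 b1 ++ alpha t2.+1 a2 b2 ++ v)
     (u ++ alpha t1.+1 b1 a1 ++ alpha t2.+1 b2 a2 ++ v) = 3.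
Proof.
move=> h1 h2 h3.
by rewrite Cf_cat Cf_block // (alphaS t2) (alphaS t2) !cat_cons Df_neqhead // Df_alpha // Df_same.
Qed.

Lemma Cf_A u v w t1 t2 a1 b1 a2 b2 : a1 != b1 -> a2 != b2 -> 1 <= size v ->
  Cf (u ++ alpha t1.+1 a1 b1 ++ v ++ alpha t2.+1 a2 b2 ++ w)
     (u ++ alpha t1.+1 b1 a1 ++ v ++ alpha t2.+1 b2 a2 ++ w) = 4.
Proof.
case: v => // c v h1 h2 _.
by rewrite Cf_cat Cf_block // !cat_cons Df_eqhead Cf_cat Cf_block // Df_same.
Qed.

Lemma Cf_B u v t1 t2 t3 a1 b1 a2 b2 a3 b3 : a1 != b1 -> a2 != b2 -> a3 != b3 ->
  ~~ ((a2 == lastal t1 b1 a1) && (b2 == lastal t1 a1 b1)) ->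
  ~~ ((a3 == lastal t2 b2 a2) && (b3 == lastal t2 a2 b2)) ->
  Cf (u ++ alpha t1.+1 a1 b1 ++ alpha t2.+1 a2 b2 ++ alpha t3.+1 a3 b3 ++ v)
     (u ++ alpha t1.+1 b1 a1 ++ alpha t2.+1 b2 a2 ++ alpha t3.+1 b3 a3 ++ v) = 4.
Proof.
move=> h1 h2 h3 h4 h5.
rewrite (alphaS t3 a3 b3) (alphaS t3 b3 a3) (alphaS t2 a2 b2) (alphaS t2 b2 a2).
rewrite Cf_cat Cf_block // !cat_cons Df_neqhead // Df_alpha //.
by rewrite Df_neqhead // Df_alpha // Df_same.
Qed.

Lemma word_hd q t a b : word q (alpha t.+1 a b) -> a < q.
Proof. by rewrite alphaS /word /= => /andP []. Qed.

Unset Implicit Arguments.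

Theorem theorem3 (q n : nat) (x y : seq nat) :
  2 <= q -> 1 <= n ->
  size x = n -> size y = n -> word q x -> word q y -> x <> y ->
  (dH (Rvec x) (Rvec y) = 3 <->
    exists (u v : seq nat) (t1 t2 a1 b1 a2 b2 : nat),
      [/\ word q u, word q v, 1 <= t1 & 1 <= t2] /\
      [/\ a1 < q, b1 < q, a2 < q & b2 < q] /\ a1 != b1 /\ a2 != b2 /\
      mset2 (alpha_last t1 a1 b1) a2 != mset2 (alpha_last t1 b1 a1) b2 /\
      x = u ++ alpha t1 a1 b1 ++ alpha t2 a2 b2 ++ v /\
      y = u ++ alpha t1 b1 a1 ++ alpha t2 b2 a2 ++ v)
  /\
  (dH (Rvec x) (Rvec y) = 4 <->
    (exists (u v w : seq nat) (t1 t2 a1 b1 a2 b2 : nat),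
      [/\ word q u, word q v, word q w & 1 <= size v] /\ 1 <= t1 /\ 1 <= t2 /\
      [/\ a1 < q, b1 < q, a2 < q & b2 < q] /\ a1 != b1 /\ a2 != b2 /\
      x = u ++ alpha t1 a1 b1 ++ v ++ alpha t2 a2 b2 ++ w /\
      y = u ++ alpha t1 b1 a1 ++ v ++ alpha t2 b2 a2 ++ w)
    \/
    (exists (u v : seq nat) (t1 t2 t3 a1 b1 a2 b2 a3 b3 : nat),
      [/\ word q u, word q v, 1 <= t1, 1 <= t2 & 1 <= t3] /\
      [/\ a1 < q, b1 < q, a2 < q & b2 < q] /\ a3 < q /\ b3 < q /\
      [/\ a1 != b1, a2 != b2 & a3 != b3] /\
      mset2 (alpha_last t1 a1 b1) a2 != mset2 (alpha_last t1 b1 a1) b2 /\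
      mset2 (alpha_last t2 a2 b2) a3 != mset2 (alpha_last t2 b2 a2) b3 /\
      x = u ++ alpha t1 a1 b1 ++ alpha t2 a2 b2 ++ alpha t3 a3 b3 ++ v /\
      y = u ++ alpha t1 b1 a1 ++ alpha t2 b2 a2 ++ alpha t3 b3 a3 ++ v)).
Proof.
move=> _ _ sx sy wx wy nxy.
have sxy : size x = size y by rewrite sx sy.
rewrite dH_Cf //; split; split.
- move=> h3; case: (Cf_inv sxy) => [//|[u [a1 [b1 [x' [y' [hab e1 e2 sz' hc]]]]]]].
  move: h3; rewrite hc => /succn_inj h2.
  case: (Df2 hab sz' h2) => t [t2 [a2 [b2 [v [hd hns g1 g2]]]]].
  have hx : x = u ++ alpha t.+1 a1 b1 ++ alpha t2.+1 a2 b2 ++ v by rewrite e1 g1 !alphaS.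
  have hy : y = u ++ alpha t.+1 b1 a1 ++ alpha t2.+1 b2 a2 ++ v by rewrite e2 g2 !alphaS.
  move: wx wy; rewrite hx hy /word !all_cat => /and4P [wu wa1 wa2 wv] /and4P [_ wb1 wb2 _].
  exists u, v, t.+1, t2.+1, a1, b1, a2, b2; split; first by split.
  split; first by split; [exact: word_hd wa1 | exact: word_hd wb1 | exact: word_hd wa2 | exact: word_hd wb2].
  do 2 (split => //).
  by rewrite !alpha_lastS ms_ns // lastal_neq.
- move=> [u [v [t1 [t2 [a1 [b1 [a2 [b2 [[wu wv ht1 ht2] [_ [hab [hd [hm [-> ->]]]]]]]]]]]]]].
  case: t1 ht1 hm => // t1 _ hm; case: t2 ht2 => // t2 _.
  rewrite !alpha_lastS ms_ns ?lastal_neq // in hm.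
  exact: Cf_two.
- move=> h4; case: (Cf_inv sxy) => [//|[u [a1 [b1 [x' [y' [hab e1 e2 sz' hc]]]]]]].
  move: h4; rewrite hc => /succn_inj h3.
  case: (Df3 hab sz' h3).
  + move=> [t [t2 [c [v0 [a2 [b2 [w [hd g1 g2]]]]]]]].
    have hx : x = u ++ alpha t.+1 a1 b1 ++ (c :: v0) ++ alpha t2.+1 a2 b2 ++ w
      by rewrite e1 g1 !alphaS.
    have hy : y = u ++ alpha t.+1 b1 a1 ++ (c :: v0) ++ alpha t2.+1 b2 a2 ++ w
      by rewrite e2 g2 !alphaS.
    move: wx wy; rewrite hx hy /word !all_cat => /and5P [wu wa1 wv wa2 ww] /and5P [_ wb1 _ wb2 _].
    left; exists u, (c :: v0), w, t.+1, t2.+1, a1, b1, a2, b2; split; first by split.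
    do 2 (split => //).
    split; first by split; [exact: word_hd wa1 | exact: word_hd wb1 | exact: word_hd wa2 | exact: word_hd wb2].
    by [].
  + move=> [t [a2 [b2 [t2 [t3 [a3 [b3 [v [hd hd3 hns hns2 [g1 g2]]]]]]]]]].
    have hx : x = u ++ alpha t.+1 a1 b1 ++ alpha t2.+1 a2 b2 ++ alpha t3.+1 a3 b3 ++ v
      by rewrite e1 g1 !alphaS !cat_cons.
    have hy : y = u ++ alpha t.+1 b1 a1 ++ alpha t2.+1 b2 a2 ++ alpha t3.+1 b3 a3 ++ v
      by rewrite e2 g2 !alphaS !cat_cons.
    move: wx wy; rewrite hx hy /word !all_cat => /and5P [wu wa1 wa2 wa3 wv] /and5P [_ wb1 wb2 wb3 _].
    right; exists u, v, t.+1, t2.+1, t3.+1, a1, b1, a2, b2, a3, b3; split; first by split.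
    split; first by split; [exact: word_hd wa1 | exact: word_hd wb1 | exact: word_hd wa2 | exact: word_hd wb2].
    split; first exact: word_hd wa3.
    split; first exact: word_hd wb3.
    split; first by split.
    rewrite !alpha_lastS !ms_ns ?lastal_neq //.
- case.
  + move=> [u [v [w [t1 [t2 [a1 [b1 [a2 [b2 [[_ _ _ hv] [ht1 [ht2 [_ [hab [hd [-> ->]]]]]]]]]]]]]]]].
    case: t1 ht1 => // t1 _; case: t2 ht2 => // t2 _.
    exact: Cf_A.
  + move=> [u [v [t1 [t2 [t3 [a1 [b1 [a2 [b2 [a3 [b3 H]]]]]]]]]]].
    move: H => [[_ _ ht1 ht2 ht3] [_ [_ [_ [[hab hd hd3] [hm1 [hm2 [-> ->]]]]]]]].
    case: t1 ht1 hm1 => // t1 _ hm1; case: t2 ht2 hm1 hm2 => // t2 _ hm1 hm2; case: t3 ht3 => // t3 _.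
    rewrite !alpha_lastS ms_ns ?lastal_neq // in hm1.
    rewrite !alpha_lastS ms_ns ?lastal_neq // in hm2.
    exact: Cf_B.
Qed.
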